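(* Let $s,d,n$ be positive integers. Then the set $\mathrm{Zer}_s(d,n)=\{A\in\Omega_s(d,n):\operatorname{Per}(A)=0\}$ is the union of finitely many (convex) polytopes.
   Context: For a positive integer $n$ let $I_n=\{1,\dots,n\}$. A $d$-dimensional matrix of order $n$ is a function $A:I_n^d\to\mathbb R$; write $M(d,n)$ for the set of these. A $k$-plane of $A$ is the restriction of $A$ to $L_1\times\cdots\times L_d$ with each $L_i\subseteq I_n$ satisfying $|L_i|\in\{1,n\}$ and exactly $k$ of the $L_i$ equal to $I_n$; a $(d-1)$-plane is a hyperplane. A diagonal of $A$ is a selection of $n$ entries of $A$, no two in the same hyperplane (equivalently, $n$ positions any two of which differ in every coordinate). The permanent $\operatorname{Per}(A)$ is the sum over all diagonals of the product of the $n$ entries of the diagonal (an empty sum is $0$). A non-negative $A\in M(d,n)$ is $s$-polystochastic if the sum of the entries in every $s$-plane equals $1$; $\Omega_s(d,n)$ denotes the set of $s$-polystochastic matrices in $M(d,n)$ (a convex polytope). *)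

(* Defs.v *)
From HB Require Import structures.
From mathcomp Require Import all_boot all_order all_algebra.
From mathcomp Require Import reals.
Set Implicit Arguments. Unset Strict Implicit. Unset Printing Implicit Defensive.
Import Order.TTheory GRing.Theory Num.Theory.
Local Open Scope ring_scope.

(* Positions of a d-dimensional matrix of order n: elements of I_n^d,
   encoded as functions 'I_d -> 'I_n (index i < n stands for i+1). *)
Definition pos (d n : nat) := {ffun 'I_d -> 'I_n}.

Definition mat (R : realType) (d n : nat) := {ffun pos d n -> R}.

(* The k-plane with free coordinate set K (#|K| = k) through position c:
   the positions agreeing with c on every coordinate outside K. *)
Definition in_plane (d n : nat) (K : {set 'I_d}) (c x : pos d n) : bool :=
  [forall i, (i \notin K) ==> (x i == c i)].

Definition polystochastic (R : realType) (s d n : nat) (A : mat R d n) : Prop :=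
  (forall x, 0 <= A x) /\
  (forall (K : {set 'I_d}), #|K| = s ->
     forall c : pos d n, \sum_(x | in_plane K c x) A x = 1).

Definition is_diagonal (d n : nat) (D : {set pos d n}) : bool :=
  (#|D| == n) &&
  [forall x in D, forall y in D, (x != y) ==> [forall i, x i != y i]].

Definition Per (R : realType) (d n : nat) (A : mat R d n) : R :=
  \sum_(D : {set pos d n} | is_diagonal D) \prod_(x in D) A x.

Definition Zer (R : realType) (s d n : nat) (A : mat R d n) : Prop :=
  polystochastic s A /\ Per A = 0.

Definition in_conv (R : realType) (d n : nat) (P : seq (mat R d n))
    (A : mat R d n) : Prop :=
  exists w : 'I_(size P) -> R,
    (forall i, 0 <= w i) /\ \sum_i w i = 1 /\
    forall x, A x = \sum_i w i * (nth 0 P i) x.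

(* Main.v *)
Require Import Defs.
From HB Require Import structures.
From mathcomp Require Import all_boot all_order all_algebra.
From mathcomp Require Import reals.
From mathcomp Require Import boolp.
From mathcomp Require Import ring lra.
Set Implicit Arguments. Unset Strict Implicit. Unset Printing Implicit Defensive.
Import Order.TTheory GRing.Theory Num.Theory.
Local Open Scope ring_scope.
Lemma reduce_step (R : realType) (T : finType) (x y : T -> R) :
  (forall i, 0 <= x i) -> (forall i, x i = 0 -> y i = 0) ->
  (exists i, y i < 0) ->
  exists t : R, 0 < t /\ (forall i, 0 <= x i + t * y i) /\
     exists i, x i != 0 /\ x i + t * y i = 0.
Proof.
move=> x0 sxy [i0 yi0].
case: (@arg_minP _ R T i0 (fun i => y i < 0) (fun i => x i / - y i) yi0) => i yi imin.
have xi : x i != 0 by apply/eqP => /sxy yi0'; move: yi; rewrite yi0' ltxx.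
have xip : 0 < x i by rewrite lt_neqAle eq_sym xi x0.
have nyi : 0 < - y i by rewrite oppr_gt0.
exists (x i / - y i); split; first by rewrite divr_gt0.
split; last first.
  exists i; split => //; have yn : - y i != 0 := lt0r_neq0 nyi.
  by rewrite -[X in _ * X]opprK mulrN divfK // subrr.
move=> j; case: (ltP (y j) 0) => yj; last first.
  by rewrite addr_ge0 // mulr_ge0 // ltW // divr_gt0.
have h := imin j yj.
have: x i / - y i * - y j <= x j by rewrite -ler_pdivlMr ?oppr_gt0.
by rewrite mulrN => hh; lra.
Qed.

Definition conv (R : realType) (T : finType) (V : seq {ffun T -> R})
    (x : {ffun T -> R}) : Prop :=
  exists w : 'I_(size V) -> R,
    (forall i, 0 <= w i) /\ \sum_i w i = 1 /\
    forall t, x t = \sum_i w i * (nth 0 V i) t.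

Lemma conv_mem (R : realType) (T : finType) (V : seq {ffun T -> R}) x :
  x \in V -> conv V x.
Proof.
move=> xV; have jlt : (index x V < size V)%N by rewrite index_mem.
pose j : 'I_(size V) := Ordinal jlt.
exists (fun i => if i == j then 1 else 0); split; first by move=> i; case: ifP.
split.
  by rewrite (bigD1 j) //= eqxx big1 ?addr0 // => i /negbTE ->.
move=> t; rewrite (bigD1 j) //= eqxx mul1r big1 ?addr0; last first.
  by move=> i /negbTE ->; rewrite mul0r.
by rewrite /= nth_index.
Qed.

Lemma conv_comb (R : realType) (T : finType) (V : seq {ffun T -> R}) x1 x2 (a b : R) :
  conv V x1 -> conv V x2 -> 0 <= a -> 0 <= b -> a + b = 1 ->
  conv V [ffun i => a * x1 i + b * x2 i].
Proof.
move=> [w1 [w10 [w1s w1x]]] [w2 [w20 [w2s w2x]]] a0 b0 ab.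
exists (fun i => a * w1 i + b * w2 i); split.
  by move=> i; rewrite addr_ge0 // mulr_ge0.
split.
  by rewrite big_split /= -!mulr_sumr w1s w2s !mulr1.
move=> t; rewrite !ffunE w1x w2x !mulr_sumr -big_split /=.
by apply: eq_bigr => i _; rewrite mulrDl !mulrA.
Qed.

Lemma polytope_vertices (R : realType) (T : finType)
    (Pp Lp : {ffun T -> R} -> Prop) :
  (forall x, Pp x -> forall i, 0 <= x i) ->
  (forall x x', Pp x -> Pp x' -> Lp (x - x')) ->
  (forall x y, Pp x -> Lp y -> (forall i, 0 <= x i + y i) ->
     (forall i, x i = 0 -> y i = 0) -> Pp (x + y)) ->
  (forall t y, Lp y -> Lp [ffun i => t * y i]) ->
  (forall y, Lp y -> (forall i, 0 <= y i) -> y = 0) ->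
  exists V : seq {ffun T -> R},
    (forall v, v \in V -> Pp v) /\ (forall x, Pp x -> conv V x).
Proof.
move=> Pnn PL PA LZ Lpos.
pose good (S : {set T}) := exists x, Pp x /\ (forall i, i \notin S -> x i = 0) /\
   (forall y, Lp y -> (forall i, i \notin S -> y i = 0) -> y = 0).
pose pt (S : {set T}) : {ffun T -> R} :=
  match pselect (good S) with left h => proj1_sig (cid h) | right _ => 0 end.
have ptP : forall S, good S -> Pp (pt S) /\ (forall i, i \notin S -> pt S i = 0) /\
   (forall y, Lp y -> (forall i, i \notin S -> y i = 0) -> y = 0).
  move=> S gS; rewrite /pt; case: pselect => // h.
  by case: (cid h).
exists (map pt (filter (fun S => `[< good S >]) (enum {set T}))); split.
  move=> v /mapP [S]; rewrite mem_filter => /andP [/asboolP gS _] ->.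
  by case: (ptP S gS).
have main : forall k (x : {ffun T -> R}), #|[set i | x i != 0]| = k -> Pp x ->
    conv (map pt (filter (fun S => `[< good S >]) (enum {set T}))) x.
  elim/ltn_ind => k IH x hk Px.
  case: (pselect (exists y, Lp y /\ y != 0 /\ (forall i, x i = 0 -> y i = 0))).
    move=> [y [Ly [ynz sxy]]].
    have negc : forall z : {ffun T -> R}, Lp z -> z != 0 -> exists i, z i < 0.
      move=> z Lz znz; case: (pselect (exists i, z i < 0)) => // hn.
      exfalso; move/eqP: znz; apply; apply: Lpos => // i.
      by rewrite leNgt; apply/negP => hi; apply: hn; exists i.
    have Ly' : Lp (- y).
      have := LZ (-1) y Ly.
      have -> // : [ffun i => -1 * y i] = - y by apply/ffunP=> i; rewrite !ffunE mulN1r.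
    have step : forall z : {ffun T -> R}, Lp z -> (forall i, x i = 0 -> z i = 0) -> z != 0 ->
        exists t : R, 0 < t /\ Pp [ffun i => x i + t * z i] /\
          (#|[set i | ([ffun j => x j + t * z j] i != 0)%R]| < k)%N.
      move=> z Lz sxz znz.
      have [t [t0 [nn [i [xi e]]]]] := reduce_step (Pnn x Px) sxz (negc z Lz znz).
      exists t; split => //; split.
        have -> : [ffun i => x i + t * z i] = x + [ffun i => t * z i].
          by apply/ffunP => j; rewrite !ffunE.
        apply: PA => //; first exact: LZ.
          by move=> j; rewrite ffunE.
        by move=> j /sxz; rewrite ffunE => ->; rewrite mulr0.
      rewrite -hk; apply: proper_card; apply/properP; split.
        apply/subsetP => j; rewrite !inE ffunE; apply: contraNN => /eqP xj.
        by rewrite xj (sxz j xj) mulr0 addr0.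
      by exists i; rewrite !inE ?ffunE ?xi // e eqxx.
    have [t1 [t10 [P1 c1]]] := step y Ly sxy ynz.
    have sxy' : forall i, x i = 0 -> (- y) i = 0.
      by move=> i /sxy; rewrite ffunE => ->; rewrite oppr0.
    have ny0 : - y != 0 by rewrite oppr_eq0.
    have [t2 [t20 [P2 c2]]] := step (- y) Ly' sxy' ny0.
    have C1 := IH _ c1 _ erefl P1.
    have C2 := IH _ c2 _ erefl P2.
    have tt0 : 0 < t1 + t2 by rewrite addr_gt0.
    have := conv_comb C1 C2 (a := t2 / (t1 + t2)) (b := t1 / (t1 + t2)).
    have -> : [ffun i => t2 / (t1 + t2) * [ffun i => x i + t1 * y i] i +
        t1 / (t1 + t2) * [ffun i => x i + t2 * (- y) i] i] = x.
      apply/ffunP => i; rewrite !ffunE; field.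
      by rewrite lt0r_neq0.
    apply.
    - by rewrite divr_ge0 // ltW.
    - by rewrite divr_ge0 // ltW.
    - by field; rewrite lt0r_neq0.
  move=> noy.
  set S := [set i | x i != 0].
  have gS : good S.
    exists x; split => //; split.
      by move=> i; rewrite inE negbK => /eqP.
    move=> y Ly yS; apply: contra_notP noy => ynz; exists y; split => //.
    split; first by apply/eqP.
    by move=> i xi; apply: yS; rewrite inE xi eqxx.
  have [Pv [vS vind]] := ptP S gS.
  have e : pt S = x.
    apply/eqP; rewrite -subr_eq0; apply/eqP; apply: vind; first exact: PL.
    move=> i iS; rewrite !ffunE vS //.
    by move: iS; rewrite inE negbK => /eqP ->; rewrite oppr0 addr0.
  apply: (@conv_mem R T); rewrite -e; apply: map_f.
  by rewrite mem_filter mem_enum andbT; apply/asboolP.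
by move=> x Px; exact: main _ x erefl Px.
Qed.

Definition PpZ (R : realType) (s d n : nat) (Z : {set pos d n}) (x : mat R d n) : Prop :=
  polystochastic s x /\ (forall z, z \in Z -> x z = 0).

Definition Lps (R : realType) (s d n : nat) (y : mat R d n) : Prop :=
  forall K : {set 'I_d}, #|K| = s -> forall c : pos d n,
    \sum_(p | in_plane K c p) y p = 0.

Definition hit (d n : nat) (Z : {set pos d n}) : bool :=
  [forall D : {set pos d n}, is_diagonal D ==> (D :&: Z != set0)].

Lemma exK (d s : nat) : (s <= d)%N -> exists K : {set 'I_d}, #|K| = s.
Proof.
move=> hs; exists [set widen_ord hs j | j : 'I_s].
rewrite card_imset ?card_ord //.
by move=> a b /(congr1 val) /= /val_inj.
Qed.

Lemma vertsZ (R : realType) (s d n : nat) (Z : {set pos d n}) :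
  (s <= d)%N ->
  exists V : seq (mat R d n),
    (forall v, v \in V -> PpZ s Z v) /\ (forall x, PpZ s Z x -> conv V x).
Proof.
move=> hs; apply: (@polytope_vertices R (pos d n) (PpZ s Z) (@Lps R s d n)).
- by move=> x [[]].
- move=> x x' [[_ hx] _] [[_ hx'] _] K hK c.
  under eq_bigr do rewrite !ffunE.
  by rewrite sumrB hx // hx' // subrr.
- move=> x y [[_ hx] zx] Ly nn sxy; split; first split.
  + by move=> p; rewrite ffunE.
  + move=> K hK c; under eq_bigr do rewrite !ffunE.
    by rewrite big_split /= hx // Ly // addr0.
  + by move=> z zZ; rewrite ffunE zx // (sxy z (zx z zZ)) addr0.
- move=> t y Ly K hK c; under eq_bigr do rewrite !ffunE.
  by rewrite -mulr_sumr Ly // mulr0.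
- move=> y Ly yp; have [K hK] := exK hs.
  apply/ffunP => p; rewrite ffunE.
  apply: (psumr_eq0P _ (Ly K hK p)) => //.
  by apply/forallP => i; apply/implyP.
Qed.

Lemma conv_PpZ (R : realType) (s d n : nat) (Z : {set pos d n}) (V : seq (mat R d n)) x :
  (forall v, v \in V -> PpZ s Z v) -> conv V x -> PpZ s Z x.
Proof.
move=> hV [w [w0 [ws wx]]].
have hv : forall i : 'I_(size V), PpZ s Z (nth 0 V i).
  by move=> i; apply: hV; apply: mem_nth.
split; first split.
- move=> p; rewrite wx; apply: sumr_ge0 => i _; apply: mulr_ge0 => //.
  by case: (hv i) => [[]].
- move=> K hK c; under eq_bigr do rewrite wx.
  rewrite exchange_big /= -ws; apply: eq_bigr => i _.
  rewrite -mulr_sumr; case: (hv i) => [[_ ->]] // _; by rewrite mulr1.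
- move=> z zZ; rewrite wx big1 // => i _.
  by case: (hv i) => _ -> //; rewrite mulr0.
Qed.

Lemma Per_zero (R : realType) (d n : nat) (Z : {set pos d n}) (x : mat R d n) :
  hit Z -> (forall z, z \in Z -> x z = 0) -> Per x = 0.
Proof.
move=> /forallP hZ xZ; rewrite /Per big1 // => D hD.
have := implyP (hZ D) hD; case/set0Pn => p; rewrite inE => /andP [pD pZ].
by rewrite (bigD1 p) //= xZ // mul0r.
Qed.

Lemma Per_hit (R : realType) (d n : nat) (x : mat R d n) :
  (forall p, 0 <= x p) -> Per x = 0 -> hit [set p | x p == 0].
Proof.
move=> x0 hP; apply/forallP => D; apply/implyP => hD.
have hnn : forall D0 : {set pos d n}, is_diagonal D0 -> 0 <= \prod_(p in D0) x p.
  by move=> D0 _; apply: prodr_ge0.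
have /eqP := psumr_eq0P hnn hP hD.
case/prodf_eq0 => p pD /eqP xp.
by apply/set0Pn; exists p; rewrite !inE pD xp eqxx.
Qed.

Theorem lemma2p1 (R : realType) (s d n : nat) :
  (0 < s)%N -> (0 < d)%N -> (0 < n)%N -> (s <= d)%N ->
  exists Ps : seq (seq (mat R d n)),
    forall A : mat R d n, Zer s A <-> (exists2 P, P \in Ps & in_conv P A).
Proof.
move=> s0 d0 n0 hs.
pose VZ (Z : {set pos d n}) := proj1_sig (cid (@vertsZ R s d n Z hs)).
have VZP : forall Z, (forall v, v \in VZ Z -> PpZ s Z v) /\
    (forall x, PpZ s Z x -> conv (VZ Z) x).
  by move=> Z; exact: (proj2_sig (cid (@vertsZ R s d n Z hs))).
exists [seq VZ Z | Z <- enum {set pos d n} & hit Z] => A; split.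
- move=> [PA hPer]; set Z := [set p | A p == 0].
  have hZ : hit Z := Per_hit PA.1 hPer.
  exists (VZ Z); first by apply: map_f; rewrite mem_filter hZ mem_enum.
  by apply: (VZP Z).2; split => // z; rewrite inE => /eqP.
- move=> [P /mapP [Z]]; rewrite mem_filter => /andP [hZ _] -> hc.
  have [PA zA] := conv_PpZ (VZP Z).1 hc.
  by split => //; apply: Per_zero hZ zA.
Qed.
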